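(* Let $\mathcal F=(F,<,+,0,\ldots)$ be a definably complete expansion of an ordered group. Let $G\subseteq F^m$ be a definably compact definable topological group and let $X\subseteq F^n$ be a definable $G$-set which is closed in $F^n$. Let $\varphi:X\to F$ be a definable continuous function. Then for every $x\in X$ the infimum $\inf\{\varphi(gx)\mid g\in G\}$ exists in $F$, so the function $\Phi:X\to F$, $\Phi(x)=\inf\{\varphi(gx)\mid g\in G\}$, is well-defined; moreover $\Phi$ is definable, $G$-invariant (i.e. $\Phi(gx)=\Phi(x)$ for all $g\in G$, $x\in X$) and continuous. In addition, for each $x\in X$ there exists $g_x\in G$ such that $\Phi(x)=\varphi(g_x x)$.
   Context: All topologies are the order topology on $F$ and the product topology on $F^k$. ''Definable'' means definable in $\mathcal F$ with parameters. $\mathcal F$ is definably complete if every definable subset of $F$ has a supremum and an infimum in $F\cup\{\pm\infty\}$. A definable topological group is a group $(G,\cdot)$ whose underlying set is a definable subset of some $F^m$ and whose multiplication and inverse maps are definable and continuous. A definable set is definably compact if it is closed and bounded in its ambient space $F^m$. A definable $G$-set is a definable set $X\subseteq F^n$ on which $G$ acts via a definable continuous map $G\times X\to X$, $(g,x)\mapsto gx$. *)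

(* Defs.v *)
From mathcomp Require Import all_boot.
Set Implicit Arguments.
Unset Strict Implicit.
Unset Printing Implicit Defensive.

(* Ordered groups (written additively; not assumed abelian).           *)
Record ogroup := OGroup {
  carrier :> Type;
  ozero : carrier;
  oadd : carrier -> carrier -> carrier;
  oopp : carrier -> carrier;
  olt : carrier -> carrier -> Prop;
  oaddA : forall x y z, oadd x (oadd y z) = oadd (oadd x y) z;
  oadd0l : forall x, oadd ozero x = x;
  oadd0r : forall x, oadd x ozero = x;
  oaddNl : forall x, oadd (oopp x) x = ozero;
  oaddNr : forall x, oadd x (oopp x) = ozero;
  olt_irrefl : forall x, ~ olt x x;
  olt_trans : forall x y z, olt x y -> olt y z -> olt x z;
  olt_total : forall x y, olt x y \/ x = y \/ olt y x;
  olt_addl : forall x y z, olt x y -> olt (oadd z x) (oadd z y);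
  olt_addr : forall x y z, olt x y -> olt (oadd x z) (oadd y z)
}.

Section Defs.
Variable F : ogroup.

Definition ole (a b : F) : Prop := a = b \/ olt a b.

Definition pt (n : nat) := 'I_n -> F.

Definition vsnoc n (x : pt n) (a : F) : pt n.+1 :=
  fun i => if unlift ord_max i is Some j then x j else a.

Definition lsub m k (z : pt (m + k)) : pt m := fun i => z (lshift k i).
Definition rsub m k (z : pt (m + k)) : pt k := fun i => z (rshift m i).

(* The definable sets (with parameters) of an expansion of (F,<,+,0):  *)
(* a family of boolean algebras D_n of subsets of F^n closed under     *)
(* F x A, A x F, projections, containing the diagonals, the graphs of  *)
(* < and +, and all points (parameters)  (van den Dries' notion of a   *)
(* structure on F expanding (F,<,+)).                                  *)
Record dstruct := DStruct {
  dset : forall n, (pt n -> Prop) -> Prop;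
  ds_compl : forall n (A : pt n -> Prop), dset A -> dset (fun x => ~ A x);
  ds_inter : forall n (A B : pt n -> Prop), dset A -> dset B ->
     dset (fun x => A x /\ B x);
  ds_Fprod : forall n (A : pt n -> Prop), dset A ->
     dset (fun x : pt n.+1 => A (fun j => x (lift ord0 j)));
  ds_prodF : forall n (A : pt n -> Prop), dset A ->
     dset (fun x : pt n.+1 => A (fun j => x (lift ord_max j)));
  ds_diag : forall n (i j : 'I_n), dset (fun x : pt n => x i = x j);
  ds_proj : forall n (A : pt n.+1 -> Prop), dset A ->
     dset (fun x : pt n => exists a, A (vsnoc x a));
  ds_lt : dset (fun x : pt 2 => olt (x ord0) (x ord_max));
  ds_add : dset (fun x : pt 3 =>
     oadd (x (Ordinal (isT : (0 < 3)%N))) (x (Ordinal (isT : (1 < 3)%N)))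
       = x (Ordinal (isT : (2 < 3)%N)));
  ds_const : forall a : F, dset (fun x : pt 1 => x ord0 = a)
}.

Variable D : dstruct.

Definition definable n (A : pt n -> Prop) : Prop := dset D A.

Definition dfun n k (A : pt n -> Prop) (f : pt n -> pt k) : Prop :=
  definable (fun z : pt (n + k) =>
     A (lsub z) /\ forall j, rsub z j = f (lsub z) j).

Inductive ext := ninf | fin of F | pinf.
Definition ext_le (s t : ext) : Prop :=
  match s, t with
  | ninf, _ => True
  | _, pinf => True
  | fin a, fin b => ole a b
  | _, _ => False
  end.
Definition is_sup_ext (A : F -> Prop) (s : ext) : Prop :=
  (forall a, A a -> ext_le (fin a) s) /\
  (forall t, (forall a, A a -> ext_le (fin a) t) -> ext_le s t).
Definition is_inf_ext (A : F -> Prop) (s : ext) : Prop :=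
  (forall a, A a -> ext_le s (fin a)) /\
  (forall t, (forall a, A a -> ext_le t (fin a)) -> ext_le t s).

Definition definably_complete : Prop :=
  forall A : F -> Prop, definable (fun x : pt 1 => A (x ord0)) ->
    (exists s, is_sup_ext A s) /\ (exists s, is_inf_ext A s).

Definition is_inf (A : F -> Prop) (s : F) : Prop :=
  (forall a, A a -> ole s a) /\ (forall t, (forall a, A a -> ole t a) -> ole t s).

(* Topology: order topology on F, product topology on F^n.  Basic open *)
(* boxes: products of open intervals / open rays / F.                  *)
Definition in_box n (lo hi : 'I_n -> option F) (x : pt n) : Prop :=
  forall i,
    (match lo i with None => True | Some a => olt a (x i) end) /\
    (match hi i with None => True | Some b => olt (x i) b end).

Definition continuous_on n k (A : pt n -> Prop) (f : pt n -> pt k) : Prop :=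
  forall x, A x -> forall lo hi, in_box lo hi (f x) ->
    exists lo' hi', in_box lo' hi' x /\
      forall y, A y -> in_box lo' hi' y -> in_box lo hi (f y).

Definition closed_set n (A : pt n -> Prop) : Prop :=
  forall x, ~ A x -> exists lo hi, in_box lo hi x /\
    forall y, in_box lo hi y -> ~ A y.

Definition bounded_set n (A : pt n -> Prop) : Prop :=
  exists lo hi : pt n, forall x, A x -> forall i, ole (lo i) (x i) /\ ole (x i) (hi i).

Definition definably_compact n (A : pt n -> Prop) : Prop :=
  definable A /\ closed_set A /\ bounded_set A.

Record dtopgroup (m : nat) := DTopGroup {
  gset : pt m -> Prop;
  gmul : pt m -> pt m -> pt m;
  ginv : pt m -> pt m;
  gone : pt m;
  g_one : gset gone;
  g_mul : forall g h, gset g -> gset h -> gset (gmul g h);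
  g_inv : forall g, gset g -> gset (ginv g);
  g_mulA : forall g h k, gset g -> gset h -> gset k ->
     gmul g (gmul h k) = gmul (gmul g h) k;
  g_mul1l : forall g, gset g -> gmul gone g = g;
  g_mul1r : forall g, gset g -> gmul g gone = g;
  g_mulVl : forall g, gset g -> gmul (ginv g) g = gone;
  g_mulVr : forall g, gset g -> gmul g (ginv g) = gone;
  g_def : definable gset;
  g_mul_def : dfun (fun z : pt (m + m) => gset (lsub z) /\ gset (rsub z))
                   (fun z => gmul (lsub z) (rsub z));
  g_mul_cont : continuous_on (fun z : pt (m + m) => gset (lsub z) /\ gset (rsub z))
                   (fun z => gmul (lsub z) (rsub z));
  g_inv_def : dfun gset ginv;
  g_inv_cont : continuous_on gset ginv
}.

Record dGset m (G : dtopgroup m) (n : nat) := DGset {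
  xset : pt n -> Prop;
  act : pt m -> pt n -> pt n;
  x_act : forall g x, gset G g -> xset x -> xset (act g x);
  x_act1 : forall x, xset x -> act (gone G) x = x;
  x_actM : forall g h x, gset G g -> gset G h -> xset x ->
     act (gmul G g h) x = act g (act h x);
  x_def : definable xset;
  x_act_def : dfun (fun z : pt (m + n) => gset G (lsub z) /\ xset (rsub z))
                   (fun z => act (lsub z) (rsub z));
  x_act_cont : continuous_on (fun z : pt (m + n) => gset G (lsub z) /\ xset (rsub z))
                   (fun z => act (lsub z) (rsub z))
}.

Definition to1 n (f : pt n -> F) : pt n -> pt 1 := fun x _ => f x.

End Defs.

(* Main.v *)
Require Import Defs.
From mathcomp Require Import all_boot zify.
From Stdlib Require Import Classical ClassicalEpsilon FunctionalExtensionality PropExtensionality.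
Set Implicit Arguments.
Unset Strict Implicit.
Unset Printing Implicit Defensive.


Section Order.
Variable F : ogroup.
Implicit Types a b c : F.

Lemma le_refl a : ole a a. Proof. by left. Qed.
Lemma lt_le a b : olt a b -> ole a b. Proof. by right. Qed.
Lemma lt_trans a b c : olt a b -> olt b c -> olt a c.
Proof. exact: olt_trans. Qed.
Lemma le_lt_trans a b c : ole a b -> olt b c -> olt a c.
Proof. by case=> [->|h] //; apply: olt_trans. Qed.
Lemma lt_le_trans a b c : olt a b -> ole b c -> olt a c.
Proof. by move=> h [<-|h'] //; apply: olt_trans h h'. Qed.
Lemma le_trans a b c : ole a b -> ole b c -> ole a c.
Proof. case=> [->|h] // h'; right; exact: lt_le_trans h h'. Qed.
Lemma lt_asym a b : olt a b -> ~ olt b a.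
Proof. move=> h h'; exact: (olt_irrefl (olt_trans h h')). Qed.
Lemma lt_neq a b : olt a b -> a <> b.
Proof. by move=> h e; subst; exact: olt_irrefl h. Qed.
Lemma le_antisym a b : ole a b -> ole b a -> a = b.
Proof. case=> [//|h] [e|h'] //; by case: (lt_asym h h'). Qed.
Lemma not_lt_le a b : ~ olt a b -> ole b a.
Proof. by case: (olt_total a b) => [//|[->|h]] _; [left|right]. Qed.
Lemma not_le_lt a b : ~ ole a b -> olt b a.
Proof. by case: (olt_total a b) => [h|[->|h]] H //; case: H; [right|left]. Qed.
Lemma le_not_lt a b : ole a b -> ~ olt b a.
Proof. move=> h h'; exact: (olt_irrefl (lt_le_trans h' h)). Qed.
Lemma lt_not_le a b : olt a b -> ~ ole b a.
Proof. move=> h h'; exact: (olt_irrefl (lt_le_trans h h')). Qed.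
Lemma le_total a b : ole a b \/ ole b a.
Proof. by case: (olt_total a b) => [h|[->|h]]; [left; right|left; left|right; right]. Qed.
Lemma le_or_lt a b : ole a b \/ olt b a.
Proof. by case: (olt_total a b) => [h|[->|h]]; [left; right|left; left|right]. Qed.

Definition nontriv := exists x y : F, olt x y.

Lemma nontriv_below : nontriv -> forall a, exists b, olt b a.
Proof.
case=> x [y hxy] a.
have he : olt (ozero F) (oadd (oopp x) y).
  by rewrite -(oaddNl x); apply: olt_addl.
exists (oadd a (oopp (oadd (oopp x) y))).
have h1 : olt (oopp (oadd (oopp x) y)) (ozero F).
  have := olt_addl (oopp (oadd (oopp x) y)) he.
  by rewrite oadd0r oaddNl.
have := olt_addl a h1; by rewrite oadd0r.
Qed.

Lemma nontriv_above : nontriv -> forall a, exists b, olt a b.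
Proof.
case=> x [y hxy] a.
have he : olt (ozero F) (oadd (oopp x) y).
  by rewrite -(oaddNl x); apply: olt_addl.
exists (oadd a (oadd (oopp x) y)).
have := olt_addl a he; by rewrite oadd0r.
Qed.

Lemma triv_eq : ~ nontriv -> forall a b : F, a = b.
Proof.
move=> nt a b; case: (olt_total a b) => [h|[//|h]]; case: nt; by do 2 eexists; eauto.
Qed.

Definition fmax a b : F := if excluded_middle_informative (olt a b) then b else a.
Definition fmin a b : F := if excluded_middle_informative (olt a b) then a else b.

Lemma fmax_lt a b c : olt (fmax a b) c <-> olt a c /\ olt b c.
Proof.
rewrite /fmax; case: excluded_middle_informative => h; split.
- by move=> h'; split => //; apply: olt_trans h h'.
- by case.
- move=> h'; split => //; exact: le_lt_trans (not_lt_le h) h'.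
- by case.
Qed.
Lemma fmin_lt a b c : olt c (fmin a b) <-> olt c a /\ olt c b.
Proof.
rewrite /fmin; case: excluded_middle_informative => h; split.
- by move=> h'; split => //; apply: olt_trans h' h.
- by case.
- move=> h'; split => //; exact: lt_le_trans h' (not_lt_le h).
- by case.
Qed.

Definition lo_ok (o : option F) a := match o with None => True | Some l => olt l a end.
Definition hi_ok (o : option F) a := match o with None => True | Some l => olt a l end.
Definition omax (o1 o2 : option F) :=
  match o1, o2 with Some a, Some b => Some (fmax a b) | Some a, None => Some a | None, o => o end.
Definition omin (o1 o2 : option F) :=
  match o1, o2 with Some a, Some b => Some (fmin a b) | Some a, None => Some a | None, o => o end.
Lemma omax_ok o1 o2 a : lo_ok (omax o1 o2) a <-> lo_ok o1 a /\ lo_ok o2 a.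
Proof. case: o1 o2 => [x|] [y|] /=; try apply: fmax_lt; tauto. Qed.
Lemma omin_ok o1 o2 a : hi_ok (omin o1 o2) a <-> hi_ok o1 a /\ hi_ok o2 a.
Proof. case: o1 o2 => [x|] [y|] /=; try apply: fmin_lt; tauto. Qed.

Lemma in_boxE n lo hi (x : pt F n) :
  in_box lo hi x <-> forall i, lo_ok (lo i) (x i) /\ hi_ok (hi i) (x i).
Proof. by []. Qed.

Definition bmax n (l1 l2 : 'I_n -> option F) i := omax (l1 i) (l2 i).
Definition bmin n (l1 l2 : 'I_n -> option F) i := omin (l1 i) (l2 i).
Lemma in_box_inter n l1 h1 l2 h2 (x : pt F n) :
  in_box (bmax l1 l2) (bmin h1 h2) x <-> in_box l1 h1 x /\ in_box l2 h2 x.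
Proof.
rewrite !in_boxE; split.
- move=> h; split=> i; have [/omax_ok [? ?] /omin_ok [? ?]] := h i; by split.
- move=> [h1' h2'] i; have [? ?] := h1' i; have [? ?] := h2' i.
  by split; [apply/omax_ok|apply/omin_ok].
Qed.

Lemma in_box_all n (x : pt F n) : in_box (fun _ => None) (fun _ => None) x.
Proof. by move=> i. Qed.

End Order.


Section XN.
Variable F : ogroup.

Definition xn n (x : pt F n) (p : nat) : F :=
  match (insub p : option 'I_n) with Some i => x i | None => ozero F end.

Lemma xnE n (x : pt F n) (i : 'I_n) : xn x i = x i.
Proof.
rewrite /xn; case: insubP => [j _ e|]; last by rewrite ltn_ord.
by congr x; apply: val_inj.
Qed.

Lemma xn_val n (x : pt F n) (i : 'I_n) p : val i = p -> x i = xn x p.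
Proof. by move=> <-; rewrite xnE. Qed.

Lemma xn_out n (x : pt F n) p : n <= p -> xn x p = ozero F.
Proof. move=> h; rewrite /xn; case: insubP => [j hj _|//]; by rewrite ltnNge h in hj. Qed.

Lemma pt_ext n (f g : pt F n) : (forall p, p < n -> xn f p = xn g p) -> f = g.
Proof. move=> h; apply: functional_extensionality => i; rewrite -!xnE; exact: h. Qed.

Definition catr k j (x : pt F k) (z : pt F j) : pt F (k + j) :=
  fun i => match split i with inl a => x a | inr b => z b end.

Lemma xn_catr k j (x : pt F k) (z : pt F j) p :
  xn (catr x z) p = if p < k then xn x p else xn z (p - k).
Proof.
case: (ltnP p (k + j)) => hp; last first.
  rewrite xn_out //; case: ifP => h; [rewrite xn_out //; lia|rewrite xn_out //; lia].
have -> : p = val (Ordinal hp) by [].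
rewrite xnE /catr; case: splitP => [a /= ea|b /= eb].
  by rewrite ea xnE.
by rewrite eb addKn xnE.
Qed.

Lemma xn_vsnoc n (x : pt F n) a p :
  xn (vsnoc x a) p = if p < n then xn x p else if p == n then a else ozero F.
Proof.
case: (ltnP p n.+1) => hp; last first.
  rewrite xn_out // ifN; last lia. by rewrite ifN; last lia.
have -> : p = val (Ordinal hp) by [].
rewrite xnE /vsnoc; case: unliftP => [j /= ej|/= e].
  have ep : p = j by rewrite -(lift_max j) -ej.
  by rewrite ep ltn_ord xnE.
have ep : p = n by move/(congr1 val): e.
by rewrite ep ltnn eqxx.
Qed.

Lemma xn_lsub m k (z : pt F (m + k)) p :
  xn (lsub z) p = if p < m then xn z p else ozero F.
Proof.
case: ltnP => h; last by rewrite xn_out.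
have -> : p = val (Ordinal h) by []. by rewrite xnE /lsub -xnE.
Qed.

Lemma xn_rsub m k (z : pt F (m + k)) p : xn (rsub z) p = xn z (m + p).
Proof.
case: (ltnP p k) => h; last by rewrite !xn_out //; lia.
have -> : p = val (Ordinal h) by []. by rewrite xnE /rsub -xnE.
Qed.

Lemma xn_cast a b (e : a = b) (w : pt F b) p :
  xn (fun i : 'I_a => w (cast_ord e i)) p = xn w p.
Proof.
case: (ltnP p a) => h; last by rewrite !xn_out //; subst.
have -> : p = val (Ordinal h) by []. rewrite xnE -xnE //.
Qed.

Definition init n (w : pt F n.+1) : pt F n := fun i => w (lift ord_max i).
Lemma xn_init n (w : pt F n.+1) p : xn (init w) p = if p < n then xn w p else ozero F.
Proof.
case: ltnP => h; last by rewrite xn_out.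
have -> : p = val (Ordinal h) by []. by rewrite xnE /init -xnE lift_max.
Qed.

Lemma vsnoc_init n (w : pt F n.+1) : vsnoc (init w) (w ord_max) = w.
Proof.
apply: pt_ext => p hp; rewrite xn_vsnoc xn_init.
case: ltnP => h //. have e : p = n by lia. rewrite e eqxx -xnE //.
Qed.
Lemma init_vsnoc n (x : pt F n) a : init (vsnoc x a) = x.
Proof. apply: pt_ext => p hp; by rewrite xn_init xn_vsnoc hp. Qed.
Lemma vsnoc_max n (x : pt F n) a : vsnoc x a ord_max = a.
Proof. by rewrite (xn_val _ (erefl _)) xn_vsnoc ltnn eqxx. Qed.
Lemma lsub_catr k j (x : pt F k) (z : pt F j) : lsub (catr x z) = x.
Proof. apply: pt_ext => p hp; by rewrite xn_lsub xn_catr hp. Qed.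
Lemma rsub_catr k j (x : pt F k) (z : pt F j) : rsub (catr x z) = z.
Proof.
apply: pt_ext => p hp; rewrite xn_rsub xn_catr ifN; last lia.
by have -> : k + p - k = p by lia.
Qed.
Lemma catr_sub k j (w : pt F (k + j)) : catr (lsub w) (rsub w) = w.
Proof.
apply: pt_ext => p hp; rewrite xn_catr xn_lsub xn_rsub.
case: ltnP => h; rewrite ?h //. by have -> : k + (p - k) = p by lia.
Qed.

Lemma catr_rshift k j (x : pt F k) (z : pt F j) i : catr x z (rshift k i) = z i.
Proof. by rewrite (xn_val _ (erefl _)) xn_catr /= ifN ?addKn ?xnE //; lia. Qed.
Lemma catr_lshift k j (x : pt F k) (z : pt F j) i : catr x z (lshift j i) = x i.
Proof. by rewrite (xn_val _ (erefl _)) xn_catr /= ltn_ord xnE. Qed.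

End XN.

Section Definability.
Variables (F : ogroup) (D : dstruct F).
Notation def := (definable D).

Lemma def_ext n (A B : pt F n -> Prop) : (forall x, A x <-> B x) -> def A -> def B.
Proof.
move=> h; have -> // : A = B.
by apply: functional_extensionality => x; apply: propositional_extensionality.
Qed.

Lemma def_not n (A : pt F n -> Prop) : def A -> def (fun x => ~ A x).
Proof. exact: ds_compl. Qed.
Lemma def_and n (A B : pt F n -> Prop) : def A -> def B -> def (fun x => A x /\ B x).
Proof. exact: ds_inter. Qed.
Lemma def_or n (A B : pt F n -> Prop) : def A -> def B -> def (fun x => A x \/ B x).
Proof.
move=> hA hB; apply: (def_ext (A := fun x => ~ (~ A x /\ ~ B x))).
  move=> x; tauto.
by apply: def_not; apply: def_and; apply: def_not.
Qed.
Lemma def_imp n (A B : pt F n -> Prop) : def A -> def B -> def (fun x => A x -> B x).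
Proof.
move=> hA hB; apply: (def_ext (A := fun x => ~ A x \/ B x)).
  move=> x; tauto.
by apply: def_or => //; apply: def_not.
Qed.
Lemma def_iff n (A B : pt F n -> Prop) : def A -> def B -> def (fun x => A x <-> B x).
Proof. by move=> hA hB; apply: def_and; apply: def_imp. Qed.

Lemma def_true n : def (fun _ : pt F n => True).
Proof.
apply: (def_ext (A := fun x : pt F n => exists a, vsnoc x a ord_max = vsnoc x a ord_max)).
  by move=> x; split => // _; exists (ozero F).
exact: ds_proj (ds_diag D ord_max ord_max).
Qed.
Lemma def_false n : def (fun _ : pt F n => False).
Proof. apply: (def_ext (A := fun x => ~ True)); first by move=> x; tauto. exact/def_not/def_true. Qed.
Lemma def_prop n (P : Prop) : def (fun _ : pt F n => P).
Proof.
case: (classic P) => h; [apply: def_ext (def_true n)|apply: def_ext (def_false n)] => x; tauto.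
Qed.

Lemma def_cast a b (e : a = b) (A : pt F a -> Prop) :
  def A -> def (fun w : pt F b => A (fun i => w (cast_ord e i))).
Proof.
case: b / e => h; apply: def_ext h => x.
suff -> : (fun i => x (cast_ord (erefl a) i)) = x by [].
by apply: functional_extensionality => i; rewrite cast_ord_id.
Qed.

Lemma def_allfin n j (P : 'I_j -> pt F n -> Prop) :
  (forall i, def (P i)) -> def (fun x => forall i, P i x).
Proof.
move=> h.
suff H : forall s : seq 'I_j, def (fun x => forall i, i \in s -> P i x).
  apply: def_ext (H (enum 'I_j)) => x; split => H' i //; first by apply: H'; rewrite mem_enum.
elim=> [|i s IH].
  by apply: def_ext (def_true n) => x; split => // _ i.
apply: def_ext (def_and (h i) IH) => x; split.
  by case=> h1 h2 i'; rewrite in_cons => /orP [/eqP ->|]; [|apply: h2].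
by move=> H; split; [apply: H; rewrite in_cons eqxx|move=> i' hi'; apply: H; rewrite in_cons hi' orbT].
Qed.

Lemma def_rcyl k j (A : pt F j -> Prop) : def A -> def (fun w : pt F (k + j) => A (rsub w)).
Proof.
move=> hA; elim: k => [|k IH].
  apply: def_ext hA => x; suff -> : rsub (m := 0) x = x by [].
  by apply: pt_ext => p hp; rewrite xn_rsub.
apply: def_ext (ds_Fprod IH) => w.
suff -> : rsub (fun j0 : 'I_(k + j) => w (lift ord0 j0)) = rsub (m := k.+1) w by [].
apply: pt_ext => p hp; rewrite !xn_rsub.
case: (ltnP (k + p) (k + j)) => h; last by rewrite !xn_out //; lia.
rewrite -(xn_val _ (erefl (val (Ordinal h)))) (xn_val _ (_ : val (lift ord0 (Ordinal h)) = k.+1 + p)) //.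
Qed.

Lemma def_exv k j (P : pt F (k + j) -> Prop) :
  def P -> def (fun x : pt F k => exists z : pt F j, P (catr x z)).
Proof.
elim: j P => [|j IH] P hP.
  have := def_cast (addn0 k) hP; apply: def_ext => x; split.
    move=> H; exists (fun _ => ozero F); move: H; congr P; apply: pt_ext => p hp.
    by rewrite xn_cast xn_catr ifT //; rewrite addn0 in hp.
  case=> z; congr P; apply: pt_ext => p hp; rewrite xn_cast xn_catr ifT //; by rewrite addn0 in hp.
have h1 := def_cast (addnS k j) hP.
have h2 := ds_proj h1.
have h3 := IH _ h2.
apply: def_ext h3 => x.
have key : forall (z' : pt F j) a,
   (fun i => vsnoc (catr x z') a (cast_ord (addnS k j) i)) = catr x (vsnoc z' a).
  move=> z' a; apply: pt_ext => p hp.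
  rewrite xn_cast xn_vsnoc !xn_catr xn_vsnoc.
  case: (ltnP p k) => h; first by rewrite ifT //; lia.
  case: (ltnP p (k + j)) => h'; first by rewrite ifT //; lia.
  have e : p = k + j by lia.
  by rewrite e eqxx addKn ltnn eqxx.
split.
  by case=> z' [a H]; exists (vsnoc z' a); rewrite -key.
case=> z H; exists (init z), (z ord_max); by rewrite key vsnoc_init.
Qed.

Lemma def_reindex k j (A : pt F j -> Prop) (s : 'I_j -> 'I_k) :
  def A -> def (fun x : pt F k => A (fun i => x (s i))).
Proof.
move=> hA.
have h1 : def (fun w : pt F (k + j) => A (rsub w) /\
                 forall i, w (rshift k i) = w (lshift j (s i))).
  apply: def_and; first exact: def_rcyl.
  apply: def_allfin => i; exact: ds_diag.
have := def_exv h1; apply: def_ext => x; split.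
  case=> z [H1 H2]; rewrite rsub_catr in H1.
  suff -> : (fun i => x (s i)) = z by [].
  apply: functional_extensionality => i; have := H2 i.
  by rewrite catr_rshift catr_lshift.
move=> H; exists (fun i => x (s i)); rewrite rsub_catr; split => // i.
by rewrite catr_rshift catr_lshift.
Qed.

Definition is_sel k j (f : pt F k -> pt F j) := exists s : 'I_j -> 'I_k, forall w i, f w i = w (s i).

Lemma def_sel k j (A : pt F j -> Prop) (f : pt F k -> pt F j) :
  is_sel f -> def A -> def (fun w => A (f w)).
Proof.
case=> s hs hA; apply: def_ext (def_reindex s hA) => w.
by have -> : f w = (fun i => w (s i)) by apply: functional_extensionality => i; rewrite hs.
Qed.

Lemma sel_id k : is_sel (fun w : pt F k => w). Proof. by exists id. Qed.
Lemma sel_lsub k j1 j2 (f : pt F k -> pt F (j1 + j2)) : is_sel f -> is_sel (fun w => lsub (f w)).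
Proof. case=> s hs; exists (fun i => s (lshift j2 i)) => w i; by rewrite /lsub hs. Qed.
Lemma sel_rsub k j1 j2 (f : pt F k -> pt F (j1 + j2)) : is_sel f -> is_sel (fun w => rsub (f w)).
Proof. case=> s hs; exists (fun i => s (rshift j1 i)) => w i; by rewrite /rsub hs. Qed.
Lemma sel_init k j (f : pt F k -> pt F j.+1) : is_sel f -> is_sel (fun w => init (f w)).
Proof. case=> s hs; exists (fun i => s (lift ord_max i)) => w i; by rewrite /init hs. Qed.
Lemma sel_catr k j1 j2 (f : pt F k -> pt F j1) (g : pt F k -> pt F j2) :
  is_sel f -> is_sel g -> is_sel (fun w => catr (f w) (g w)).
Proof.
case=> s hs [t ht]; exists (fun i => match split i with inl a => s a | inr b => t b end) => w i.
by rewrite /catr; case: split.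
Qed.
Lemma sel_vsnoc k j (f : pt F k -> pt F j) (l : 'I_k) :
  is_sel f -> is_sel (fun w => vsnoc (f w) (w l)).
Proof.
case=> s hs; exists (fun i => match unlift ord_max i with Some a => s a | None => l end) => w i.
by rewrite /vsnoc; case: unlift.
Qed.
Lemma sel_one k (l : 'I_k) : is_sel (fun w : pt F k => fun _ : 'I_1 => w l).
Proof. by exists (fun _ => l). Qed.
Lemma sel_max k j (f : pt F k -> pt F j.+1) : is_sel f -> is_sel (fun w => fun _ : 'I_1 => f w ord_max).
Proof. case=> s hs; exists (fun _ => s ord_max) => w i; by rewrite hs. Qed.

Lemma def_lt k (a b : 'I_k) : def (fun w : pt F k => olt (w a) (w b)).
Proof.
have := def_reindex (fun i : 'I_2 => if i == ord0 then a else b) (ds_lt D).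
apply: def_ext => w /=. done.
Qed.
Lemma def_eqc k (a : 'I_k) c : def (fun w : pt F k => w a = c).
Proof. have := def_reindex (fun _ : 'I_1 => a) (ds_const D c). by apply: def_ext. Qed.
Lemma def_le k (a b : 'I_k) : def (fun w : pt F k => ole (w a) (w b)).
Proof. rewrite /ole; apply: def_or; [exact: ds_diag|exact: def_lt]. Qed.

Lemma def_ex1 k (P : pt F k -> F -> Prop) :
  def (fun w : pt F k.+1 => P (init w) (w ord_max)) -> def (fun x => exists a, P x a).
Proof.
move=> h; apply: def_ext (ds_proj h) => x.
by split; case=> a H; exists a; move: H; rewrite init_vsnoc vsnoc_max.
Qed.
Lemma def_all1 k (P : pt F k -> F -> Prop) :
  def (fun w : pt F k.+1 => P (init w) (w ord_max)) -> def (fun x => forall a, P x a).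
Proof.
move=> h; have := def_not (def_ex1 (P := fun x a => ~ P x a) (def_not h)).
apply: def_ext => x; split; first by move=> H a; apply: NNPP => H'; apply: H; exists a.
by move=> H [a]; apply.
Qed.
Lemma def_exb k j (P : pt F k -> pt F j -> Prop) :
  def (fun w : pt F (k + j) => P (lsub w) (rsub w)) -> def (fun x => exists z, P x z).
Proof.
move=> h; apply: def_ext (def_exv h) => x; split; case=> z H; exists z; move: H; by rewrite lsub_catr rsub_catr.
Qed.
Lemma def_allb k j (P : pt F k -> pt F j -> Prop) :
  def (fun w : pt F (k + j) => P (lsub w) (rsub w)) -> def (fun x => forall z, P x z).
Proof.
move=> h; have := def_not (def_exb (P := fun x z => ~ P x z) (def_not h)).
apply: def_ext => x; split; first by move=> H a; apply: NNPP => H'; apply: H; exists a.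
by move=> H [a]; apply.
Qed.
Lemma def_fix k j (P : pt F k -> pt F j -> Prop) :
  def (fun w : pt F (k + j) => P (lsub w) (rsub w)) -> forall y, def (fun x => P x y).
Proof.
move=> h y.
have h2 : def (fun w : pt F (k + j) => P (lsub w) (rsub w) /\ forall i, w (rshift k i) = y i).
  by apply: def_and => //; apply: def_allfin => i; apply: def_eqc.
have := def_exv h2; apply: def_ext => x; split.
  case=> z [H1 H2]; rewrite lsub_catr rsub_catr in H1.
  suff <- : z = y by [].
  apply: functional_extensionality => i; by rewrite -H2 catr_rshift.
move=> H; exists y; rewrite lsub_catr rsub_catr; split => // i.
by rewrite catr_rshift.
Qed.

End Definability.


Section Auto.
Variables (F : ogroup) (D : dstruct F).
Notation def := (definable D).

Definition is_coord k (a : pt F k -> F) := exists l : 'I_k, forall w, a w = w l.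
Lemma coord_var k (l : 'I_k) : is_coord (fun w : pt F k => w l). Proof. by exists l. Qed.
Lemma coord_sel k j (f : pt F k -> pt F j) i : is_sel f -> is_coord (fun w => f w i).
Proof. by case=> s hs; exists (s i) => w; rewrite hs. Qed.
Lemma sel_vsnoc' k j (f : pt F k -> pt F j) (a : pt F k -> F) :
  is_sel f -> is_coord a -> is_sel (fun w => vsnoc (f w) (a w)).
Proof.
case=> s hs [l hl]; exists (fun i => match unlift ord_max i with Some b => s b | None => l end) => w i.
by rewrite /vsnoc; case: unlift => [b|]; rewrite ?hs ?hl.
Qed.
Lemma sel_single k (a : pt F k -> F) : is_coord a -> is_sel (fun w => fun _ : 'I_1 => a w).
Proof. by case=> l hl; exists (fun _ => l) => w i; rewrite hl. Qed.

Lemma def_ltc k (a b : pt F k -> F) : is_coord a -> is_coord b -> def (fun w => olt (a w) (b w)).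
Proof.
case=> l hl [l' hl']; apply: def_ext (def_lt D l l') => w; by rewrite hl hl'.
Qed.
Lemma def_eqcc k (a b : pt F k -> F) : is_coord a -> is_coord b -> def (fun w => a w = b w).
Proof.
case=> l hl [l' hl']; apply: def_ext (ds_diag D l l') => w; by rewrite hl hl'.
Qed.
Lemma def_lec k (a b : pt F k -> F) : is_coord a -> is_coord b -> def (fun w => ole (a w) (b w)).
Proof. move=> ha hb; apply: def_or; [exact: def_eqcc|exact: def_ltc]. Qed.
Lemma def_eqk k (a : pt F k -> F) c : is_coord a -> def (fun w => a w = c).
Proof. case=> l hl; apply: def_ext (def_eqc D l c) => w; by rewrite hl. Qed.
Lemma def_atom k j (A : pt F j -> Prop) (f : pt F k -> pt F j) :
  def A -> is_sel f -> def (fun w => A (f w)).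
Proof. by move=> hA hf; apply: def_sel. Qed.

Lemma sel_lsub0 k j : is_sel (@lsub F k j). Proof. exact: (@sel_lsub F (k + j) k j (fun w => w) (sel_id _ _)). Qed.
Lemma sel_rsub0 k j : is_sel (@rsub F k j). Proof. exact: (@sel_rsub F (k + j) k j (fun w => w) (sel_id _ _)). Qed.
Lemma sel_init0 k : is_sel (@init F k). Proof. exact: (@sel_init F k.+1 k (fun w => w) (sel_id _ _)). Qed.

End Auto.

Ltac sel_rec n := match n with
  | O => fail
  | S ?m => first
  [ exact: sel_id | exact: coord_var | exact: sel_lsub0 | exact: sel_rsub0 | exact: sel_init0
  | (apply: sel_vsnoc'; sel_rec m) | (apply: sel_catr; sel_rec m) | (apply: sel_lsub; sel_rec m)
  | (apply: sel_rsub; sel_rec m) | (apply: sel_init; sel_rec m) | (apply: coord_sel; sel_rec m) ]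
  end.
Ltac sel_tac := sel_rec 6.

Ltac def_step := first
  [ apply: def_and | apply: def_or | apply: def_not | apply: def_imp | apply: def_iff
  | apply: def_allfin => ?
  | apply: def_ex1 | apply: def_all1 | apply: def_exb | apply: def_allb
  | (apply: def_ltc; sel_tac) | (apply: def_lec; sel_tac) | (apply: def_eqk; sel_tac)
  | (apply: def_eqcc; sel_tac) ].




Section Boxes.
Variable F : ogroup.

Definition gcat T k j (f : 'I_k -> T) (g : 'I_j -> T) : 'I_(k + j) -> T :=
  fun i => match split i with inl a => f a | inr b => g b end.
Definition gsnoc T n (f : 'I_n -> T) (a : T) : 'I_n.+1 -> T :=
  fun i => if unlift ord_max i is Some j then f j else a.

Lemma gcat_l T k j (f : 'I_k -> T) (g : 'I_j -> T) i : gcat f g (lshift j i) = f i.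
Proof. by rewrite /gcat (unsplitK (inl i : 'I_k + 'I_j)). Qed.
Lemma gcat_r T k j (f : 'I_k -> T) (g : 'I_j -> T) i : gcat f g (rshift k i) = g i.
Proof. by rewrite /gcat (unsplitK (inr i : 'I_k + 'I_j)). Qed.
Lemma split_cases k j (P : 'I_(k + j) -> Prop) :
  (forall a, P (lshift j a)) -> (forall b, P (rshift k b)) -> forall i, P i.
Proof.
move=> h1 h2 i; case: (splitP i) => [a e|b e].
  by have -> : i = lshift j a by apply: val_inj.
by have -> : i = rshift k b by apply: val_inj.
Qed.
Lemma snoc_cases n (P : 'I_n.+1 -> Prop) :
  (forall a, P (lift ord_max a)) -> P ord_max -> forall i, P i.
Proof.
move=> h1 h2 i; case: (unliftP ord_max i) => [a ->|->] //.
Qed.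
Lemma gsnoc_l T n (f : 'I_n -> T) a i : gsnoc f a (lift ord_max i) = f i.
Proof. by rewrite /gsnoc liftK. Qed.
Lemma gsnoc_max T n (f : 'I_n -> T) a : gsnoc f a ord_max = a.
Proof. by rewrite /gsnoc unlift_none. Qed.

Lemma catr_gcat k j (x : pt F k) (z : pt F j) : catr x z = gcat x z.
Proof. by []. Qed.
Lemma vsnoc_l n (x : pt F n) a i : vsnoc x a (lift ord_max i) = x i.
Proof. exact: gsnoc_l. Qed.

Lemma in_box_cat k j lo hi (w : pt F (k + j)) :
  in_box lo hi w <->
  in_box (fun i => lo (lshift j i)) (fun i => hi (lshift j i)) (lsub w) /\
  in_box (fun i => lo (rshift k i)) (fun i => hi (rshift k i)) (rsub w).
Proof.
split; first by move=> h; split=> i; exact: h.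
case=> h1 h2; apply: split_cases; [exact: h1|exact: h2].
Qed.
Lemma in_box_gcat k j l1 h1 l2 h2 (w : pt F (k + j)) :
  in_box (gcat l1 l2) (gcat h1 h2) w <-> in_box l1 h1 (lsub w) /\ in_box l2 h2 (rsub w).
Proof.
rewrite in_box_cat.
have E1 : (fun i => gcat l1 l2 (lshift j i)) = l1 by apply: functional_extensionality => i; rewrite gcat_l.
have E2 : (fun i => gcat h1 h2 (lshift j i)) = h1 by apply: functional_extensionality => i; rewrite gcat_l.
have E3 : (fun i => gcat l1 l2 (rshift k i)) = l2 by apply: functional_extensionality => i; rewrite gcat_r.
have E4 : (fun i => gcat h1 h2 (rshift k i)) = h2 by apply: functional_extensionality => i; rewrite gcat_r.
by rewrite E1 E2 E3 E4.
Qed.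
Lemma in_box_snoc n lo hi (w : pt F n.+1) :
  in_box lo hi w <->
  in_box (fun i => lo (lift ord_max i)) (fun i => hi (lift ord_max i)) (init w) /\
  lo_ok (lo ord_max) (w ord_max) /\ hi_ok (hi ord_max) (w ord_max).
Proof.
split; first by move=> h; split; [move=> i; exact: h|exact: h].
case=> h1 [h2 h3]; apply: snoc_cases; [exact: h1|by split].
Qed.
Lemma in_box_gsnoc n l h u v (w : pt F n.+1) :
  in_box (gsnoc l u) (gsnoc h v) w <-> in_box l h (init w) /\ lo_ok u (w ord_max) /\ hi_ok v (w ord_max).
Proof.
rewrite in_box_snoc !gsnoc_max.
have E1 : (fun i => gsnoc l u (lift ord_max i)) = l by apply: functional_extensionality => i; rewrite gsnoc_l.
have E2 : (fun i => gsnoc h v (lift ord_max i)) = h by apply: functional_extensionality => i; rewrite gsnoc_l.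
by rewrite E1 E2.
Qed.

Lemma lo_ok_le o (a b : F) : lo_ok o a -> ole a b -> lo_ok o b.
Proof. case: o => //= l h h'; exact: lt_le_trans h h'. Qed.
Lemma hi_ok_le o (a b : F) : hi_ok o b -> ole a b -> hi_ok o a.
Proof. case: o => //= l h h'; exact: le_lt_trans h' h. Qed.

Definition fbox n (p q : pt F n) (y : pt F n) := forall i, olt (p i) (y i) /\ olt (y i) (q i).

Lemma fbox_box n (p q y : pt F n) : fbox p q y <-> in_box (fun i => Some (p i)) (fun i => Some (q i)) y.
Proof. by []. Qed.

Lemma fbox_exists n (y : pt F n) : nontriv F -> exists p q, fbox p q y.
Proof.
move=> nt.
exists (fun i => proj1_sig (constructive_indefinite_description _ (nontriv_below nt (y i)))).
exists (fun i => proj1_sig (constructive_indefinite_description _ (nontriv_above nt (y i)))).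
move=> i; split; by case: constructive_indefinite_description.
Qed.

Definition lomix (l : option F) (p : F) := match l with Some a => fmax a p | None => p end.
Definition himix (l : option F) (p : F) := match l with Some a => fmin a p | None => p end.

Lemma fbox_inter n (p q y : pt F n) lo hi :
  fbox p q y -> in_box lo hi y ->
  exists p' q', fbox p' q' y /\ forall y', fbox p' q' y' -> fbox p q y' /\ in_box lo hi y'.
Proof.
move=> h1 h2; exists (fun i => lomix (lo i) (p i)), (fun i => himix (hi i) (q i)); split.
  move=> i; have [a1 b1] := h1 i; have [a2 b2] := h2 i; rewrite /lomix /himix.
  by case: (lo i) a2 => [l|] a2; case: (hi i) b2 => [u|] b2; split => //;
     try apply/fmax_lt; try apply/fmin_lt.
move=> y' h; split=> i; have := h i; rewrite /lomix /himix;
  case: (lo i) => [l|]; case: (hi i) => [u|] /=; rewrite ?fmax_lt ?fmin_lt; tauto.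
Qed.

End Boxes.


Section RI.
Variables (F : ogroup) (D : dstruct F).
Hypothesis hdc : definably_complete D.
Notation def := (definable D).

Lemma real_ind (S : F -> Prop) :
  def (fun x : pt F 1 => S (x ord0)) ->
  (forall a b, ole a b -> S b -> S a) -> (exists a, S a) ->
  (forall s, (forall a, olt a s -> S a) -> S s) ->
  (forall s, S s -> exists u : option F, hi_ok u s /\ forall c, olt s c -> hi_ok u c -> S c) ->
  forall a, S a.
Proof.
move=> hdef hdown [a0 ha0] hcl hop.
have [[s [hs1 hs2]] _] := hdc hdef.
have ub : forall a, ~ S a -> forall b, S b -> ole b a.
  move=> a na b hb; apply: not_lt_le => h; apply: na; apply: (hdown _ _ (lt_le h) hb).
case: s hs1 hs2 => [|s|] hs1 hs2.
- by have := hs1 _ ha0.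
- have below : forall a, olt a s -> S a.
    move=> a ha; apply: NNPP => na; have := hs2 (fin a) (ub _ na) => /=.
    by move/(lt_not_le ha).
  have Ss := hcl _ below.
  have [u [hu1 hu2]] := hop _ Ss.
  move=> a; case: (le_or_lt a s) => h; first exact: hdown h Ss.
  case: u hu1 hu2 => [u|] /= hu1 hu2; last exact: hu2.
  case: (le_or_lt u a) => h'; last exact: hu2.
  have Su : S u.
    apply: hcl => b hb; case: (le_or_lt b s) => h2; first exact: hdown h2 Ss.
    exact: hu2.
  have := hs1 _ Su => /= H; by case: (lt_not_le hu1 H).
- move=> a; apply: NNPP => na; by have := hs2 (fin a) (ub _ na).
Qed.

Definition good N (C : pt F N.+1 -> Prop) (y : pt F N) (a : F) :=
  exists p q : pt F N, (forall i, olt (p i) (y i) /\ olt (y i) (q i)) /\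
   forall a' (y' : pt F N), ole a' a -> (forall i, olt (p i) (y' i) /\ olt (y' i) (q i)) ->
     ~ C (vsnoc y' a').

Lemma good_def N (C : pt F N.+1 -> Prop) y : def C -> def (fun x : pt F 1 => good C y (x ord0)).
Proof.
move=> hC.
apply: (def_fix (P := fun x y => good C y (x ord0))).
rewrite /good.
do 20 (try def_step; try (apply: def_atom; [exact: hC|sel_tac])).
Qed.

Lemma tube1 N (C : pt F N.+1 -> Prop) (lo hi : F) :
  def C -> closed_set C -> (forall w, C w -> ole lo (w ord_max) /\ ole (w ord_max) hi) ->
  closed_set (fun y : pt F N => exists a, C (vsnoc y a)).
Proof.
move=> hC hcl hb y hy.
case: (classic (nontriv F)) => nt; last first.
  exists (fun _ => None), (fun _ => None); split => // y' _ [a ha]; apply: hy; exists a.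
  suff <- : y' = y by [].
  by apply: functional_extensionality => i; apply: triv_eq.
have nC : forall a, ~ C (vsnoc y a) by move=> a h; apply: hy; exists a.
have Hall : forall a, good C y a.
  apply: real_ind.
  - exact: good_def.
  - move=> a b hab [p [q [h1 h2]]]; exists p, q; split => // a' y' h; apply: h2; exact: le_trans h hab.
  - have [a0 ha0] := nontriv_below nt lo.
    have [p [q hpq]] := fbox_exists y nt.
    exists a0, p, q; split => // a' y' h _ hc.
    have [h1 _] := hb _ hc; rewrite vsnoc_max in h1.
    by case: (lt_not_le (le_lt_trans (le_trans h1 h) ha0) (le_refl _)).
  - move=> s below.
    have [lo' [hi' [hin hout]]] := hcl _ (nC s).
    have [hin1 [hin2 hin3]] := (in_box_snoc _ _ _).1 hin.
    rewrite init_vsnoc vsnoc_max in hin1 hin2 hin3.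
    have [p1 [q1 [hpq1 hav]]] : exists p1 q1, fbox p1 q1 y /\ forall a' y', fbox p1 q1 y' ->
          ~ lo_ok (lo' ord_max) a' -> ~ C (vsnoc y' a').
      case E : (lo' ord_max) hin2 => [l|] /= hl.
        have [p [q [h1 h2]]] := below _ hl.
        exists p, q; split => // a' y' hy' hla'; apply: h2 => //; exact: not_lt_le.
      have [p [q hpq]] := fbox_exists y nt.
      by exists p, q; split => // a' y' _ [].
    have [p [q [hpq hsub]]] := fbox_inter hpq1 hin1.
    exists p, q; split => // a' y' ha' hy'.
    have [hy1 hy2] := hsub _ hy'.
    case: (classic (lo_ok (lo' ord_max) a')) => hl; last exact: hav.
    apply: hout; apply/in_box_snoc; rewrite init_vsnoc vsnoc_max; split => //; split => //.
    exact: hi_ok_le hin3 ha'.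
  - move=> s [p1 [q1 [hpq1 hav]]].
    have [lo' [hi' [hin hout]]] := hcl _ (nC s).
    have [hin1 [hin2 hin3]] := (in_box_snoc _ _ _).1 hin.
    rewrite init_vsnoc vsnoc_max in hin1 hin2 hin3.
    exists (hi' ord_max); split => // c hsc hc.
    have [p [q [hpq hsub]]] := fbox_inter hpq1 hin1.
    exists p, q; split => // a' y' ha' hy'.
    have [hy1 hy2] := hsub _ hy'.
    case: (le_or_lt a' s) => h; first exact: hav.
    apply: hout; apply/in_box_snoc; rewrite init_vsnoc vsnoc_max; split => //; split.
      exact: lo_ok_le hin2 (lt_le h).
    exact: hi_ok_le hc ha'.
have [p [q [hpq hav]]] := Hall hi.
exists (fun i => Some (p i)), (fun i => Some (q i)); split => // y' hy' [a ha].
have [_ h2] := hb _ ha; rewrite vsnoc_max in h2.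
exact: hav h2 hy' ha.
Qed.

End RI.


Section Atoms.
Variables (F : ogroup) (D : dstruct F).
Notation def := (definable D).

Lemma def_atom1 k (T : F -> Prop) (a : pt F k -> F) :
  def (fun x : pt F 1 => T (x ord0)) -> is_coord a -> def (fun w => T (a w)).
Proof.
move=> hT ha; have := def_sel (sel_single ha) hT; by apply: def_ext.
Qed.
Lemma def_atom2 k (E : F -> F -> Prop) (a b : pt F k -> F) :
  def (fun v : pt F 2 => E (v ord0) (v ord_max)) -> is_coord a -> is_coord b -> def (fun w => E (a w) (b w)).
Proof.
move=> hE ha hb.
have := def_sel (sel_vsnoc' (sel_single ha) hb) hE; apply: def_ext => w.
have -> : (ord0 : 'I_2) = lift ord_max ord0 by apply: val_inj.
by rewrite vsnoc_l vsnoc_max.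
Qed.
Lemma def_atom_cb k m (E : F -> pt F m -> Prop) (a : pt F k -> F) (f : pt F k -> pt F m) :
  def (fun w : pt F (1 + m) => E (lsub w ord0) (rsub w)) -> is_coord a -> is_sel f -> def (fun w => E (a w) (f w)).
Proof.
move=> hE ha hf.
have := def_sel (sel_catr (sel_single ha) hf) hE; apply: def_ext => w.
by rewrite lsub_catr rsub_catr.
Qed.
Lemma def_atom_bb k m1 m2 (E : pt F m1 -> pt F m2 -> Prop) (f : pt F k -> pt F m1) (g : pt F k -> pt F m2) :
  def (fun w : pt F (m1 + m2) => E (lsub w) (rsub w)) -> is_sel f -> is_sel g -> def (fun w => E (f w) (g w)).
Proof.
move=> hE hf hg.
have := def_sel (sel_catr hf hg) hE; apply: def_ext => w.
by rewrite lsub_catr rsub_catr.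
Qed.
End Atoms.

Ltac datom H := first
  [ (refine (def_atom1 H _); sel_tac)
  | (refine (def_atom2 H _ _); sel_tac)
  | (refine (def_atom_cb H _ _); sel_tac)
  | (refine (def_atom_bb H _ _); sel_tac)
  | (refine (def_atom H _); sel_tac) ].

Section Closed.
Variable F : ogroup.

Lemma closed_ext n (A B : pt F n -> Prop) : (forall x, A x <-> B x) -> closed_set A -> closed_set B.
Proof. move=> h hA x hx; have [lo [hi [h1 h2]]] := hA x (fun H => hx ((h x).1 H)).
exists lo, hi; split => // y hy hB; exact: h2 hy ((h y).2 hB). Qed.

Lemma closed_cast a b (e : a = b) (A : pt F a -> Prop) :
  closed_set A -> closed_set (fun w : pt F b => A (fun i => w (cast_ord e i))).
Proof.
case: b / e => h; apply: closed_ext h => x.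
suff -> : (fun i => x (cast_ord (erefl a) i)) = x by [].
by apply: functional_extensionality => i; rewrite cast_ord_id.
Qed.

Lemma closed_slice_l k j (A : pt F (k + j) -> Prop) (z : pt F j) :
  closed_set A -> closed_set (fun x : pt F k => A (catr x z)).
Proof.
move=> hA x hx; have [lo [hi [h1 h2]]] := hA _ hx.
have [hl hr] := (in_box_cat _ _ _).1 h1; rewrite lsub_catr rsub_catr in hl hr.
exists (fun i => lo (lshift j i)), (fun i => hi (lshift j i)); split => // y hy.
apply: h2; apply/in_box_cat; by rewrite lsub_catr rsub_catr.
Qed.
Lemma closed_slice_r k j (A : pt F (k + j) -> Prop) (x : pt F k) :
  closed_set A -> closed_set (fun z : pt F j => A (catr x z)).
Proof.
move=> hA z hz; have [lo [hi [h1 h2]]] := hA _ hz.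
have [hl hr] := (in_box_cat _ _ _).1 h1; rewrite lsub_catr rsub_catr in hl hr.
exists (fun i => lo (rshift k i)), (fun i => hi (rshift k i)); split => // y hy.
apply: h2; apply/in_box_cat; by rewrite lsub_catr rsub_catr.
Qed.
Lemma closed_fiber n (A : pt F n.+1 -> Prop) (v : pt F n) :
  closed_set A -> closed_set (fun u : pt F 1 => A (vsnoc v (u ord0))).
Proof.
move=> hA u hu; have [lo [hi [h1 h2]]] := hA _ hu.
have [hl [hm hr]] := (in_box_snoc _ _ _).1 h1; rewrite init_vsnoc vsnoc_max in hl hm hr.
exists (fun _ => lo ord_max), (fun _ => hi ord_max); split.
  by move=> i; rewrite (ord1 i).
move=> y hy; apply: h2; apply/in_box_snoc; rewrite init_vsnoc vsnoc_max; split => //; exact: hy.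
Qed.

Lemma rsub_cast k j (w : pt F (k + j).+1) :
  rsub (fun i : 'I_(k + j.+1) => w (cast_ord (addnS k j) i)) = vsnoc (rsub (init w)) (w ord_max).
Proof.
apply: pt_ext => p hp; rewrite xn_rsub xn_cast xn_vsnoc xn_rsub xn_init.
case: ltnP => h; first by rewrite ifT //; lia.
have e : p = j by lia. rewrite e eqxx. by rewrite (xn_val _ (erefl _)).
Qed.

Lemma catr_snoc_cast k j (x : pt F k) (z' : pt F j) a :
   (fun i => vsnoc (catr x z') a (cast_ord (addnS k j) i)) = catr x (vsnoc z' a).
Proof.
  apply: pt_ext => p hp.
  rewrite xn_cast xn_vsnoc !xn_catr xn_vsnoc.
  case: (ltnP p k) => h; first by rewrite ifT //; lia.
  case: (ltnP p (k + j)) => h'; first by rewrite ifT //; lia.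
  have e : p = k + j by lia.
  by rewrite e eqxx addKn ltnn eqxx.
Qed.

End Closed.

Section Tube.
Variables (F : ogroup) (D : dstruct F).
Hypothesis hdc : definably_complete D.
Notation def := (definable D).

Lemma tubeb k j (C : pt F (k + j) -> Prop) (lo hi : pt F j) :
  def C -> closed_set C ->
  (forall w, C w -> forall i, ole (lo i) (rsub w i) /\ ole (rsub w i) (hi i)) ->
  closed_set (fun x : pt F k => exists z, C (catr x z)).
Proof.
elim: j C lo hi => [|j IH] C lo hi hC hcl hb.
  have := closed_slice_l (z := fun _ : 'I_0 => ozero F) hcl; apply: closed_ext => x; split.
    by move=> h; exists (fun _ => ozero F).
  case=> z; suff -> : z = (fun _ => ozero F) by [].
  by apply: functional_extensionality => -[].
set C' := fun w : pt F (k + j).+1 => C (fun i => w (cast_ord (addnS k j) i)).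
have hC' : def C' by apply: def_cast.
have hcl' : closed_set C' by apply: closed_cast.
have hb' : forall w, C' w -> ole (lo ord_max) (w ord_max) /\ ole (w ord_max) (hi ord_max).
  move=> w hw; have := hb _ hw ord_max; by rewrite rsub_cast vsnoc_max.
have hE := tube1 hdc hC' hcl' hb'.
have hEd : def (fun v : pt F (k + j) => exists a, C' (vsnoc v a)) by apply: ds_proj.
have hEb : forall v, (exists a, C' (vsnoc v a)) ->
   forall i, ole (lo (lift ord_max i)) (rsub v i) /\ ole (rsub v i) (hi (lift ord_max i)).
  move=> v [a ha] i; have := hb _ ha (lift ord_max i).
  by rewrite rsub_cast init_vsnoc vsnoc_l.
have := IH _ _ _ hEd hE hEb; apply: closed_ext => x; split.
  case=> z' [a H]; exists (vsnoc z' a); move: H; by rewrite /C' catr_snoc_cast.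
case=> z H; exists (init z), (z ord_max); by rewrite /C' catr_snoc_cast vsnoc_init.
Qed.

Lemma closed_min (S : F -> Prop) :
  def (fun x : pt F 1 => S (x ord0)) -> closed_set (fun u : pt F 1 => S (u ord0)) ->
  (exists a, S a) -> (exists l, forall a, S a -> ole l a) ->
  exists c, S c /\ forall a, S a -> ole c a.
Proof.
move=> hd hcl [a0 ha0] [l hl].
have [_ [s [hs1 hs2]]] := hdc hd.
case: s hs1 hs2 => [|s|] hs1 hs2.
- by have := hs2 (fin l) hl.
- exists s; split; last by move=> a ha; exact: hs1 _ ha.
  apply: NNPP => ns.
  have [lo [hi [h1 h2]]] := hcl (fun _ => s) ns.
  have [hl1 hh1] := h1 ord0.
  case E : (hi ord0) hh1 => [u|] /= hu.
    have lb : forall a, S a -> ole u a.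
      move=> a ha; apply: not_lt_le => hau.
      apply: (h2 (fun _ => a)) => //.
      move=> i; rewrite (ord1 i) E; split => //.
      exact: lo_ok_le hl1 (hs1 _ ha).
    by have := hs2 (fin u) lb => /= /(lt_not_le hu).
  apply: (h2 (fun _ => a0)) => //.
  move=> i; rewrite (ord1 i) E; split => //; exact: lo_ok_le hl1 (hs1 _ ha0).
- by have := hs1 _ ha0.
Qed.

Lemma nested1 (T : F -> Prop) (E : F -> F -> Prop) (lo hi : F) :
  def (fun x : pt F 1 => T (x ord0)) ->
  def (fun v : pt F 2 => E (v ord0) (v ord_max)) ->
  (forall t, closed_set (fun u : pt F 1 => E t (u ord0))) ->
  (forall t a, E t a -> ole lo a /\ ole a hi) ->
  (forall t t', T t -> T t' -> ole t t' -> forall a, E t a -> E t' a) ->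
  (forall t, T t -> exists a, E t a) -> (exists t, T t) ->
  exists a, forall t, T t -> E t a.
Proof.
move=> hT hE hcl hb hdec hne [t0 ht0].
have hEt : forall t, def (fun x : pt F 1 => E t (x ord0)).
  move=> t; apply: (def_ext (A := fun x : pt F 1 => exists b, b = t /\ E b (x ord0))).
    by move=> x; split; [case=> b [-> ?]|move=> ?; exists t].
  do 10 (try def_step; try datom hE). 
have hmin : forall t, T t -> exists c, E t c /\ forall a, E t a -> ole c a.
  move=> t ht; apply: closed_min => //; first exact: hne.
  by exists lo => a ha; case: (hb _ _ ha).
set Cs := fun c => exists t, T t /\ E t c /\ forall a, E t a -> ole c a.
have hCs : def (fun x : pt F 1 => Cs (x ord0)).
  rewrite /Cs; do 20 (try def_step; try datom hE; try datom hT).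
have [[s [hs1 hs2]] _] := hdc hCs.
have [c0 hc0] := hmin _ ht0.
have Cs0 : Cs c0 by exists t0.
case: s hs1 hs2 => [|s|] hs1 hs2.
- by have := hs1 _ Cs0.
- exists s => t ht; apply: NNPP => ns.
  have [lo' [hi' [h1 h2]]] := hcl t (fun _ => s) ns.
  have [hl1 hh1] := h1 ord0.
  have [c' [Cc' hlc']] : exists c', Cs c' /\ lo_ok (lo' ord0) c'.
    case E1 : (lo' ord0) hl1 => [l|] /= hl.
      apply: NNPP => H; have ub : forall c, Cs c -> ole c l.
        by move=> c hc; apply: not_lt_le => hlc; apply: H; exists c.
      by have := hs2 (fin l) ub => /= /(lt_not_le hl).
    by exists c0.
  case: Cc' => t' [ht' [hc'1 hc'2]].
  have [tt [htt [htt1 htt2]]] : exists tt, T tt /\ ole tt t /\ ole tt t'.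
    case: (le_total t t') => h; [exists t|exists t']; split => //; split => //; exact: le_refl.
  have [c'' [hc''1 hc''2]] := hmin _ htt.
  have Cc'' : Cs c'' by exists tt.
  have hc'c'' : ole c' c'' by apply: hc'2; exact: hdec htt ht' htt2 _ hc''1.
  apply: (h2 (fun _ => c'')); last exact: hdec htt ht htt1 _ hc''1.
  move=> i; rewrite (ord1 i); split; first exact: lo_ok_le hlc' hc'c''.
  exact: hi_ok_le hh1 (hs1 _ Cc'').
- have ub : forall c, Cs c -> ole c hi.
    by move=> c [t [ht [hc _]]]; case: (hb _ _ hc).
  by have := hs2 (fin hi) ub.
Qed.

End Tube.


Section Nested.
Variables (F : ogroup) (D : dstruct F).
Hypothesis hdc : definably_complete D.
Notation def := (definable D).

Lemma def_slice m (E : F -> pt F m -> Prop) t :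
  def (fun w : pt F (1 + m) => E (lsub w ord0) (rsub w)) -> def (E t).
Proof.
move=> hE; apply: (def_ext (A := fun x => exists b, b = t /\ E b x)).
  by move=> x; split; [case=> b [-> ?]|move=> ?; exists t].
do 10 (try def_step; try datom hE).
Qed.

Lemma nestedm m (T : F -> Prop) (E : F -> pt F m -> Prop) (lo hi : pt F m) :
  def (fun x : pt F 1 => T (x ord0)) ->
  def (fun w : pt F (1 + m) => E (lsub w ord0) (rsub w)) ->
  (forall t, closed_set (E t)) ->
  (forall t x, E t x -> forall i, ole (lo i) (x i) /\ ole (x i) (hi i)) ->
  (forall t t', T t -> T t' -> ole t t' -> forall x, E t x -> E t' x) ->
  (forall t, T t -> exists x, E t x) -> (exists t, T t) ->
  exists x, forall t, T t -> E t x.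
Proof.
elim: m E lo hi => [|m IH] E lo hi hT hE hcl hb hdec hne hT0.
  exists (fun _ => ozero F) => t ht; have [x hx] := hne _ ht.
  suff <- : x = (fun _ => ozero F) by [].
  by apply: functional_extensionality => -[].
set E' := fun t (v : pt F m) => exists a, E t (vsnoc v a).
have hE' : def (fun w : pt F (1 + m) => E' (lsub w ord0) (rsub w)).
  rewrite /E'; do 10 (try def_step; try datom hE).
have hcl' : forall t, closed_set (E' t).
  move=> t; apply: (tube1 hdc (lo := lo ord_max) (hi := hi ord_max)); first exact: def_slice.
    exact: hcl.
  by move=> w hw; exact: hb hw ord_max.
have hb' : forall t x, E' t x -> forall i, ole (lo (lift ord_max i)) (x i) /\ ole (x i) (hi (lift ord_max i)).
  move=> t x [a ha] i; have := hb _ _ ha (lift ord_max i); by rewrite vsnoc_l.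
have hdec' : forall t t', T t -> T t' -> ole t t' -> forall x, E' t x -> E' t' x.
  move=> t t' h1 h2 h3 x [a ha]; exists a; exact: hdec h1 h2 h3 _ ha.
have hne' : forall t, T t -> exists x, E' t x.
  move=> t ht; have [x hx] := hne _ ht; exists (init x), (x ord_max); by rewrite vsnoc_init.
have [v0 hv0] := IH E' _ _ hT hE' hcl' hb' hdec' hne' hT0.
set E2 := fun t a => E t (vsnoc v0 a).
have hE2 : def (fun v : pt F 2 => E2 (v ord0) (v ord_max)).
  apply: (def_fix (P := fun (x : pt F 2) y => E (x ord0) (vsnoc y (x ord_max)))).
  do 10 (try def_step; try datom hE).
have [a0 ha0] : exists a, forall t, T t -> E2 t a.
  apply: (nested1 hdc (lo := lo ord_max) (hi := hi ord_max) hT hE2) => //.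
  - move=> t; exact: closed_fiber (hcl t).
  - move=> t a h; have := hb _ _ h ord_max; by rewrite vsnoc_max.
  - move=> t t' h1 h2 h3 a h; exact: hdec _ _ h1 h2 h3 _ h.
exists (vsnoc v0 a0) => t ht; exact: ha0.
Qed.

End Nested.


Section Topo.
Variable F : ogroup.

Lemma cont_comp n k l (A : pt F n -> Prop) (B : pt F k -> Prop) (f : pt F n -> pt F k) (h : pt F k -> pt F l) :
  continuous_on A f -> continuous_on B h -> (forall x, A x -> B (f x)) ->
  continuous_on A (fun x => h (f x)).
Proof.
move=> hf hh hAB x hx lo hi hbox.
have [lo1 [hi1 [h1 h2]]] := hh _ (hAB _ hx) _ _ hbox.
have [lo2 [hi2 [h3 h4]]] := hf _ hx _ _ h1.
exists lo2, hi2; split => // y hy hy'; apply: h2; [exact: hAB|exact: h4].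
Qed.

Lemma cont_slice_r k j l (A : pt F (k + j) -> Prop) (f : pt F (k + j) -> pt F l) (x : pt F k) :
  continuous_on A f -> continuous_on (fun z => A (catr x z)) (fun z => f (catr x z)).
Proof.
move=> hf z hz lo hi hb.
have [lo' [hi' [h1 h2]]] := hf _ hz _ _ hb.
have [hl hr] := (in_box_cat _ _ _).1 h1; rewrite lsub_catr rsub_catr in hl hr.
exists (fun i => lo' (rshift k i)), (fun i => hi' (rshift k i)); split => // y hy hy'.
apply: h2 => //; apply/in_box_cat; by rewrite lsub_catr rsub_catr.
Qed.
Lemma cont_slice_l k j l (A : pt F (k + j) -> Prop) (f : pt F (k + j) -> pt F l) (z : pt F j) :
  continuous_on A f -> continuous_on (fun x => A (catr x z)) (fun x => f (catr x z)).
Proof.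
move=> hf x hx lo hi hb.
have [lo' [hi' [h1 h2]]] := hf _ hx _ _ hb.
have [hl hr] := (in_box_cat _ _ _).1 h1; rewrite lsub_catr rsub_catr in hl hr.
exists (fun i => lo' (lshift j i)), (fun i => hi' (lshift j i)); split => // y hy hy'.
apply: h2 => //; apply/in_box_cat; by rewrite lsub_catr rsub_catr.
Qed.
Lemma cont_swap k j l (A : pt F (k + j) -> Prop) (f : pt F (k + j) -> pt F l) :
  continuous_on A f ->
  continuous_on (fun w : pt F (j + k) => A (catr (rsub w) (lsub w))) (fun w => f (catr (rsub w) (lsub w))).
Proof.
move=> hf w hw lo hi hb.
have [lo' [hi' [h1 h2]]] := hf _ hw _ _ hb.
have [hl hr] := (in_box_cat _ _ _).1 h1; rewrite lsub_catr rsub_catr in hl hr.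
exists (gcat (fun i => lo' (rshift k i)) (fun i => lo' (lshift j i))).
exists (gcat (fun i => hi' (rshift k i)) (fun i => hi' (lshift j i))).
split; first by apply/in_box_gcat.
move=> y hy /in_box_gcat [hy1 hy2]; apply: (h2 _ hy); apply/in_box_cat; by rewrite lsub_catr rsub_catr.
Qed.

Lemma closed_and n (A B : pt F n -> Prop) : closed_set A -> closed_set B -> closed_set (fun x => A x /\ B x).
Proof.
move=> hA hB x hx; case: (classic (A x)) => ha.
  have [lo [hi [h1 h2]]] := hB x (fun hb => hx (conj ha hb)).
  by exists lo, hi; split => // y hy [_ hb]; exact: h2 hy hb.
have [lo [hi [h1 h2]]] := hA x ha.
by exists lo, hi; split => // y hy [ha2 _]; exact: h2 hy ha2.
Qed.
Lemma closed_lcyl k j (A : pt F k -> Prop) : closed_set A -> closed_set (fun w : pt F (k + j) => A (lsub w)).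
Proof.
move=> hA w hw; have [lo [hi [h1 h2]]] := hA _ hw.
exists (gcat lo (fun _ => None)), (gcat hi (fun _ => None)); split.
  by apply/in_box_gcat; split => //; exact: in_box_all.
by move=> y /in_box_gcat [hy _]; exact: h2.
Qed.
Lemma closed_rcyl k j (A : pt F j -> Prop) : closed_set A -> closed_set (fun w : pt F (k + j) => A (rsub w)).
Proof.
move=> hA w hw; have [lo [hi [h1 h2]]] := hA _ hw.
exists (gcat (fun _ => None) lo), (gcat (fun _ => None) hi); split.
  by apply/in_box_gcat; split => //; exact: in_box_all.
by move=> y /in_box_gcat [_ hy]; exact: h2.
Qed.

Lemma in_box1 (lo hi : 'I_1 -> option F) (u : pt F 1) :
  in_box lo hi u <-> lo_ok (lo ord0) (u ord0) /\ hi_ok (hi ord0) (u ord0).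
Proof. by split; [move=> h; exact: h|move=> h i; rewrite (ord1 i)]. Qed.

Lemma closed_sublevel n (K : pt F n -> Prop) (h : pt F n -> F) t :
  closed_set K -> continuous_on K (to1 h) -> closed_set (fun x => K x /\ ole (h x) t).
Proof.
move=> hK hc x hx; case: (classic (K x)) => kx; last first.
  have [lo [hi [h1 h2]]] := hK _ kx.
  by exists lo, hi; split => // y hy [ky _]; exact: h2 hy ky.
have ht : olt t (h x) by apply: not_le_lt => H; exact: hx (conj kx H).
have [lo [hi [h1 h2]]] := hc _ kx (fun _ => Some t) (fun _ => None) (fun i => conj ht I).
exists lo, hi; split => // y hy [ky hle].
have := h2 _ ky hy ord0 => -[/= H _]; exact: lt_not_le H hle.
Qed.

End Topo.


Section MoreAtoms.
Variables (F : ogroup) (D : dstruct F).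
Notation def := (definable D).
Lemma def_atom3c k m1 m2 (E : pt F m1 -> pt F m2 -> F -> Prop) (f : pt F k -> pt F m1) (g : pt F k -> pt F m2) (a : pt F k -> F) :
  def (fun w : pt F ((m1 + m2) + 1) => E (lsub (lsub w)) (rsub (lsub w)) (rsub w ord0)) ->
  is_sel f -> is_sel g -> is_coord a -> def (fun w => E (f w) (g w) (a w)).
Proof.
move=> hE hf hg ha.
have := def_sel (sel_catr (sel_catr hf hg) (sel_single ha)) hE; apply: def_ext => w.
by rewrite !lsub_catr !rsub_catr.
Qed.
Lemma def_atom3 k m1 m2 m3 (E : pt F m1 -> pt F m2 -> pt F m3 -> Prop) (f : pt F k -> pt F m1) (g : pt F k -> pt F m2) (h : pt F k -> pt F m3) :
  def (fun w : pt F ((m1 + m2) + m3) => E (lsub (lsub w)) (rsub (lsub w)) (rsub w)) ->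
  is_sel f -> is_sel g -> is_sel h -> def (fun w => E (f w) (g w) (h w)).
Proof.
move=> hE hf hg hh.
have := def_sel (sel_catr (sel_catr hf hg) hh) hE; apply: def_ext => w.
by rewrite !lsub_catr !rsub_catr.
Qed.
Lemma def_atom_bc k m1 (E : pt F m1 -> F -> Prop) (f : pt F k -> pt F m1) (a : pt F k -> F) :
  def (fun w : pt F (m1 + 1) => E (lsub w) (rsub w ord0)) ->
  is_sel f -> is_coord a -> def (fun w => E (f w) (a w)).
Proof.
move=> hE hf ha.
have := def_sel (sel_catr hf (sel_single ha)) hE; apply: def_ext => w.
by rewrite !lsub_catr !rsub_catr.
Qed.
End MoreAtoms.

Ltac datomM H := first
  [ (refine (def_atom3c H _ _ _); sel_tac)
  | (refine (def_atom3 H _ _ _); sel_tac)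
  | (refine (def_atom_bc H _ _); sel_tac)
  | (refine (def_atom H _); sel_tac) ].

Section ContMisc.
Variable F : ogroup.
Lemma cont_sub n k (A B : pt F n -> Prop) (f : pt F n -> pt F k) :
  (forall x, B x -> A x) -> continuous_on A f -> continuous_on B f.
Proof.
move=> hBA hf x hx lo hi hb; have [lo' [hi' [h1 h2]]] := hf _ (hBA _ hx) _ _ hb.
exists lo', hi'; split => // y hy; exact: h2 (hBA _ hy).
Qed.
Lemma cont_ext n k (B : pt F n -> Prop) (f g : pt F n -> pt F k) :
  (forall x, B x -> f x = g x) -> continuous_on B f -> continuous_on B g.
Proof.
move=> e hf x hx lo hi hb; rewrite -e // in hb; have [lo' [hi' [h1 h2]]] := hf _ hx _ _ hb.
exists lo', hi'; split => // y hy hy'; rewrite -e //; exact: h2.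
Qed.
End ContMisc.

Section Main.
Variables (F : ogroup) (D : dstruct F).
Hypothesis hdc : definably_complete D.
Variables (m n : nat) (G : dtopgroup D m).
Hypothesis hGc : definably_compact D (gset G).
Variable X : dGset G n.
Hypothesis hXc : closed_set (xset X).
Variable phi : pt F n -> F.
Hypothesis hphi_def : dfun D (xset X) (to1 phi).
Hypothesis hphi_cont : continuous_on (xset X) (to1 phi).
Notation def := (definable D).

Definition psi g x := phi (act X g x).
Definition AGR (g : pt F m) (x y : pt F n) := gset G g /\ xset X x /\ y = act X g x.
Definition PGR (y : pt F n) (t : F) := xset X y /\ t = phi y.
Definition RLE g x t := gset G g /\ xset X x /\ ole (psi g x) t.
Definition RGE g x t := gset G g /\ xset X x /\ ole t (psi g x).
Definition REQ g x t := gset G g /\ xset X x /\ t = psi g x.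

Lemma hGdef : def (gset G). Proof. by case: hGc. Qed.
Lemma hGcl : closed_set (gset G). Proof. by case: hGc => _ []. Qed.
Lemma hXdef : def (xset X). Proof. exact: x_def. Qed.

Lemma hAGR : def (fun w : pt F ((m + n) + n) => AGR (lsub (lsub w)) (rsub (lsub w)) (rsub w)).
Proof.
have := x_act_def X; rewrite /dfun; apply: def_ext => w; rewrite /AGR; split.
  case=> [[h1 h2] h3]; split => //; split => //; exact: functional_extensionality.
by case=> h1 [h2 ->].
Qed.
Lemma hPGR : def (fun w : pt F (n + 1) => PGR (lsub w) (rsub w ord0)).
Proof.
have := hphi_def; rewrite /dfun; apply: def_ext => w; rewrite /PGR; split.
  by case=> h1 h2; split => //; exact: h2.
by case=> h1 h2; split => // j; rewrite (ord1 j).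
Qed.

Lemma psi_graph (R : F -> F -> Prop) g x t :
  (gset G g /\ xset X x /\ R (psi g x) t) <-> exists y r, AGR g x y /\ PGR y r /\ R r t.
Proof.
split.
  case=> h1 [h2 h3]; exists (act X g x), (psi g x); split => //; split => //.
  by split => //; apply: x_act.
by case=> y [r [[h1 [h2 ->]] [[h4 ->] h5]]].
Qed.

Lemma hRLE : def (fun w : pt F ((m + n) + 1) => RLE (lsub (lsub w)) (rsub (lsub w)) (rsub w ord0)).
Proof.
apply: (def_ext (A := fun w : pt F ((m + n) + 1) => exists y r, AGR (lsub (lsub w)) (rsub (lsub w)) y /\
   PGR y r /\ ole r (rsub w ord0))).
  by move=> w; rewrite /RLE psi_graph.
do 20 (try datomM hAGR; try datomM hPGR; try def_step).
Qed.
Lemma hRGE : def (fun w : pt F ((m + n) + 1) => RGE (lsub (lsub w)) (rsub (lsub w)) (rsub w ord0)).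
Proof.
apply: (def_ext (A := fun w : pt F ((m + n) + 1) => exists y r, AGR (lsub (lsub w)) (rsub (lsub w)) y /\
   PGR y r /\ ole (rsub w ord0) r)).
  by move=> w; rewrite /RGE (psi_graph (fun a b => ole b a)).
do 20 (try datomM hAGR; try datomM hPGR; try def_step).
Qed.
Lemma hREQ : def (fun w : pt F ((m + n) + 1) => REQ (lsub (lsub w)) (rsub (lsub w)) (rsub w ord0)).
Proof.
apply: (def_ext (A := fun w : pt F ((m + n) + 1) => exists y r, AGR (lsub (lsub w)) (rsub (lsub w)) y /\
   PGR y r /\ rsub w ord0 = r)).
  move=> w; rewrite /REQ (psi_graph (fun a b => b = a)); done.
do 20 (try datomM hAGR; try datomM hPGR; try def_step).
Qed.


Lemma cpsi : continuous_on (fun z : pt F (m + n) => gset G (lsub z) /\ xset X (rsub z))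
   (to1 (fun z => psi (lsub z) (rsub z))).
Proof. exact (cont_comp (@x_act_cont _ _ _ _ _ X) hphi_cont (fun z hz => @x_act _ _ _ _ _ X _ _ (proj1 hz) (proj2 hz))). Qed.

Lemma cpsi_g x0 : xset X x0 -> continuous_on (gset G) (to1 (fun g => psi g x0)).
Proof.
move=> hx0; have := cont_slice_l (z := x0) cpsi.
move/(cont_sub (B := gset G)) => H.
have {}H : continuous_on (gset G) (fun x => to1 (fun z => psi (lsub z) (rsub z)) (catr x x0)).
  by apply: H => g hg; rewrite lsub_catr rsub_catr.
apply: cont_ext H => g hg; by rewrite /to1 lsub_catr rsub_catr.
Qed.

Lemma cpsi_x g0 : gset G g0 -> continuous_on (xset X) (to1 (fun x => psi g0 x)).
Proof.
move=> hg0; have := cont_slice_r (x := g0) cpsi.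
move/(cont_sub (B := xset X)) => H.
have {}H : continuous_on (xset X) (fun z => to1 (fun z => psi (lsub z) (rsub z)) (catr g0 z)).
  by apply: H => x hx; rewrite lsub_catr rsub_catr.
apply: cont_ext H => x hx; by rewrite /to1 lsub_catr rsub_catr.
Qed.

Lemma cpsi_swap : continuous_on (fun w : pt F (n + m) => gset G (rsub w) /\ xset X (lsub w))
   (to1 (fun w => psi (rsub w) (lsub w))).
Proof.
have := cont_swap cpsi.
move/(cont_sub (B := fun w : pt F (n + m) => gset G (rsub w) /\ xset X (lsub w))) => H.
have {}H : continuous_on (fun w : pt F (n + m) => gset G (rsub w) /\ xset X (lsub w))
   (fun w => to1 (fun z => psi (lsub z) (rsub z)) (catr (rsub w) (lsub w))).
  by apply: H => w hw; rewrite lsub_catr rsub_catr.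
apply: cont_ext H => w hw; by rewrite /to1 lsub_catr rsub_catr.
Qed.

Lemma Emin x : xset X x -> exists g0, gset G g0 /\ forall g, gset G g -> ole (psi g0 x) (psi g x).
Proof.
move=> hx.
have [lo [hi hb]] : bounded_set (gset G) by case: hGc => _ [].
have h1 : def (fun u : pt F 1 => exists g, RLE g x (u ord0)).
  apply: (def_fix (P := fun (u : pt F 1) (x : pt F n) => exists g, RLE g x (u ord0))).
  do 20 (try datomM hRLE; try def_step).
have h2 : def (fun w : pt F (1 + m) => RLE (rsub w) x (lsub w ord0)).
  apply: (def_fix (P := fun (w : pt F (1 + m)) (x : pt F n) => RLE (rsub w) x (lsub w ord0))).
  do 20 (try datomM hRLE; try def_step).
have h3 : forall t, closed_set (fun g => RLE g x t).
  move=> t; have := closed_sublevel (t := t) hGcl (cpsi_g hx); apply: closed_ext => g.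
  by rewrite /RLE; tauto.
have h4 : forall t g, RLE g x t -> forall i, ole (lo i) (g i) /\ ole (g i) (hi i).
  by move=> t g [hg _]; exact: hb.
have h5 : forall t t', (exists g, RLE g x t) -> (exists g, RLE g x t') -> ole t t' ->
    forall g, RLE g x t -> RLE g x t'.
  move=> t t' _ _ htt g [e1 [e2 e3]]; split => //; split => //; exact: le_trans e3 htt.
have h6 : forall t, (exists g, RLE g x t) -> exists g, RLE g x t by [].
have h7 : exists t, exists g, RLE g x t.
  by exists (psi (gone G) x), (gone G); split; [exact: g_one|split => //; exact: le_refl].
have [g0 hg0] := nestedm hdc h1 h2 h3 h4 h5 h6 h7.
exists g0.
  have [hg _] := hg0 (psi (gone G) x) (ex_intro _ (gone G) (conj (g_one G) (conj hx (le_refl _)))).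
  split => // g hg'.
  have [_ [_ H]] := hg0 (psi g x) (ex_intro _ g (conj hg' (conj hx (le_refl _)))); exact: H.
Qed.

Lemma Zclosed a : closed_set (fun y : pt F n => exists g, RLE g y a).
Proof.
have [lo [hi hb]] : bounded_set (gset G) by case: hGc => _ [].
have hC : def (fun w : pt F (n + m) => RLE (rsub w) (lsub w) a).
  apply: (def_fix (P := fun (w : pt F (n + m)) (c : pt F 1) => RLE (rsub w) (lsub w) (c ord0)) _ (fun _ => a)).
  do 20 (try datomM hRLE; try def_step).
have hcl : closed_set (fun w : pt F (n + m) => RLE (rsub w) (lsub w) a).
  have := closed_sublevel (t := a) (closed_and (closed_rcyl (k := n) hGcl) (closed_lcyl (j := m) hXc)) cpsi_swap.
  by apply: closed_ext => w; rewrite /RLE; tauto.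
have := tubeb hdc hC hcl (lo := lo) (hi := hi) (fun w hw => hb _ hw.1).
apply: closed_ext => y; split; case=> g H; exists g; move: H; by rewrite /= ?lsub_catr ?rsub_catr.
Qed.


Lemma main_aux :
  exists Phi : pt F n -> F,
    (forall x, xset X x ->
       is_inf (fun t => exists g, gset G g /\ t = phi (act X g x)) (Phi x)) /\
    dfun D (xset X) (to1 Phi) /\
    (forall g x, gset G g -> xset X x -> Phi (act X g x) = Phi x) /\
    continuous_on (xset X) (to1 Phi) /\
    (forall x, xset X x -> exists g, gset G g /\ Phi x = phi (act X g x)).
Proof.
have hmin : forall x, exists g0, xset X x -> gset G g0 /\ forall g, gset G g -> ole (psi g0 x) (psi g x).
  move=> x; case: (classic (xset X x)) => hx; last by exists (gone G).
  have [g0 h] := Emin hx; by exists g0.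
pose gs x := proj1_sig (constructive_indefinite_description _ (hmin x)).
have gsP : forall x, xset X x -> gset G (gs x) /\ forall g, gset G g -> ole (psi (gs x) x) (psi g x).
  move=> x hx; rewrite /gs; case: constructive_indefinite_description => g0 /= H; exact: H.
pose Phi x := psi (gs x) x.
have PhiP : forall x, xset X x -> forall g, gset G g -> ole (Phi x) (psi g x).
  by move=> x hx; exact: (gsP x hx).2.
exists Phi; split.
  move=> x hx; split.
    by move=> a [g [hg ->]]; exact: PhiP.
  move=> t H; apply: H; exists (gs x); split => //; exact: (gsP x hx).1.
split.
  rewrite /dfun.
  have hd : def (fun z : pt F (n + 1) => xset X (lsub z) /\ (exists g, REQ g (lsub z) (rsub z ord0)) /\
      forall g, gset G g -> RGE g (lsub z) (rsub z ord0)).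
    do 20 (try datomM hREQ; try datomM hRGE; try datomM hXdef; try datomM hGdef; try def_step).
  apply: def_ext hd => z; split.
    case=> hx [[g [hg [_ e]]] H]; split => // j; rewrite (ord1 j) /to1.
    apply: le_antisym.
      have [_ [_ h]] := H _ (gsP _ hx).1; exact: h.
    by rewrite e; exact: PhiP.
  case=> hx H; have e : rsub z ord0 = Phi (lsub z) by exact: H.
  split => //; split.
    exists (gs (lsub z)); split; first exact: (gsP _ hx).1.
    by split.
  move=> g hg; split => //; split => //; rewrite e; exact: PhiP.
split.
  move=> g x hg hx.
  have hx' : xset X (act X g x) by apply: x_act.
  apply: le_antisym.
    have [hgs _] := gsP _ hx.
    have hgi : gset G (ginv G g) by apply: g_inv.
    have hm : gset G (gmul G (gs x) (ginv G g)) by apply: g_mul.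
    have := PhiP _ hx' _ hm.
    suff -> : psi (gmul G (gs x) (ginv G g)) (act X g x) = Phi x by [].
    rewrite /psi /Phi -x_actM //.
    by rewrite -g_mulA ?g_mulVl ?g_mul1r.
  have [hgs _] := gsP _ hx'.
  have hm : gset G (gmul G (gs (act X g x)) g) by apply: g_mul.
  have := PhiP _ hx _ hm.
  suff -> : psi (gmul G (gs (act X g x)) g) x = Phi (act X g x) by [].
  by rewrite /psi /Phi x_actM.
split; last first.
  move=> x hx; exists (gs x); split; [exact: (gsP x hx).1|done].
move=> x0 hx0 lo hi /in_box1 [hlo hhi].
have [hg0 _] := gsP _ hx0.
have [l1 [h1 [hb1 W1]]] : exists l1 h1, in_box l1 h1 x0 /\
    forall y, xset X y -> in_box l1 h1 y -> hi_ok (hi ord0) (Phi y).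
  case E : (hi ord0) hhi => [b|] hb; last by exists (fun _ => None), (fun _ => None); split => //; exact: in_box_all.
  have hbx : in_box (fun _ => None) (fun _ => Some b) (to1 (fun x => psi (gs x0) x) x0).
    by apply/in_box1.
  have [l1 [h1 [e1 e2]]] := cpsi_x hg0 hx0 hbx.
  exists l1, h1; split => // y hy hy'.
  have := (in_box1 _ _ _).1 (e2 _ hy hy') => -[_ /= H].
  exact: le_lt_trans (PhiP _ hy _ hg0) H.
have [l2 [h2 [hb2 W2]]] : exists l2 h2, in_box l2 h2 x0 /\
    forall y, xset X y -> in_box l2 h2 y -> lo_ok (lo ord0) (Phi y).
  case E : (lo ord0) hlo => [a|] ha; last by exists (fun _ => None), (fun _ => None); split => //; exact: in_box_all.
  have nZ : ~ exists g, RLE g x0 a.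
    case=> g [hg [_ hle]]; have := le_trans (PhiP _ hx0 _ hg) hle; exact: lt_not_le ha.
  have [l2 [h2 [e1 e2]]] := Zclosed nZ.
  exists l2, h2; split => // y hy hy' /=.
  apply: not_le_lt => H; apply: (e2 _ hy'); exists (gs y); split; first exact: (gsP _ hy).1.
  by split.
exists (bmax l1 l2), (bmin h1 h2); split; first by apply/in_box_inter.
move=> y hy /in_box_inter [hy1 hy2]; apply/in_box1; split; [exact: W2|exact: W1].
Qed.

End Main.


Theorem lemma2p1 (F : ogroup) (D : dstruct F)
  (hdc : definably_complete D)
  (m n : nat) (G : dtopgroup D m)
  (hGc : definably_compact D (gset G))
  (X : dGset G n)
  (hXc : closed_set (xset X))
  (phi : pt F n -> F)
  (hphi_def : dfun D (xset X) (to1 phi))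
  (hphi_cont : continuous_on (xset X) (to1 phi)) :
  exists Phi : pt F n -> F,
    (forall x, xset X x ->
       is_inf (fun t => exists g, gset G g /\ t = phi (act X g x)) (Phi x)) /\
    dfun D (xset X) (to1 Phi) /\
    (forall g x, gset G g -> xset X x -> Phi (act X g x) = Phi x) /\
    continuous_on (xset X) (to1 Phi) /\
    (forall x, xset X x -> exists g, gset G g /\ Phi x = phi (act X g x)).
Proof.
exact: (main_aux hdc hGc hXc hphi_def hphi_cont).
Qed.
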